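(* Let $B$ be an associative ring with unit, let $n\geq 3$, and let $\phi$ be a homogeneous quasi-homomorphism on $\Gamma=EL_n(B)$. Then: (1) $\phi(s)=0$ for every elementary matrix $s\in\Gamma$; (2) $\phi(h)=0$ for every $h\in U_nB\cup L_nB$.
   Context: An elementary matrix in $M_n(B)$ is a matrix whose diagonal entries are $1$ and all of whose off-diagonal entries except at most one are $0$; $EL_n(B)$ is the group generated by all elementary matrices. $U_nB$ (resp. $L_nB$) denotes the group of unit upper (resp. lower) triangular matrices in $EL_n(B)$, i.e. those with all diagonal entries $1$ and all entries below (resp. above) the diagonal equal to $0$. A quasi-homomorphism on a group $\Gamma$ is a function $\phi\colon\Gamma\to\mathbb{R}$ with $\sup_{g,h\in\Gamma}|\phi(gh)-\phi(g)-\phi(h)|<\infty$; it is homogeneous if $\phi(g^m)=m\,\phi(g)$ for all $g\in\Gamma$ and $m\in\mathbb{Z}$. *)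

(* Defs.v *)
From HB Require Import structures.
From mathcomp Require Import all_boot all_order all_algebra.
From mathcomp Require Import reals.
Set Implicit Arguments. Unset Strict Implicit. Unset Printing Implicit Defensive.
Import Order.TTheory GRing.Theory Num.Theory.
Local Open Scope ring_scope.

Definition elementary (B : pzRingType) (n : nat) (s : 'M[B]_n) : Prop :=
  (forall i, s i i = 1) /\
  exists i j : 'I_n, forall k l : 'I_n, k != l -> (k, l) != (i, j) -> s k l = 0.

(* Since the inverse of
   an elementary matrix (1 + a e_ij, i <> j) is the elementary matrix
   1 - a e_ij, this is the set of finite products of elementary matrices. *)
Inductive EL (B : pzRingType) (n : nat) : 'M[B]_n -> Prop :=
| EL_one : EL (1%:M)
| EL_mul s g : elementary s -> EL g -> EL (s *m g).

Fixpoint mxpow (B : pzRingType) (n : nat) (g : 'M[B]_n) (k : nat) : 'M[B]_n :=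
  match k with 0 => 1%:M | k'.+1 => g *m mxpow g k' end.

Definition mxzpow (B : pzRingType) (n : nat) (g ginv : 'M[B]_n) (m : int)
  : 'M[B]_n :=
  match m with Posz k => mxpow g k | Negz k => mxpow ginv k.+1 end.

Definition quasi_hom (R : realType) (B : pzRingType) (n : nat)
  (phi : 'M[B]_n -> R) : Prop :=
  exists C : R, forall g h, EL g -> EL h ->
    `|phi (g *m h) - phi g - phi h| <= C.

Definition homogeneous (R : realType) (B : pzRingType) (n : nat)
  (phi : 'M[B]_n -> R) : Prop :=
  forall g ginv, EL g -> EL ginv -> g *m ginv = 1%:M -> ginv *m g = 1%:M ->
    forall m : int, phi (mxzpow g ginv m) = m%:~R * phi g.

Definition unit_upper (B : pzRingType) (n : nat) (h : 'M[B]_n) : Prop :=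
  EL h /\ (forall i, h i i = 1) /\ (forall i j : 'I_n, (j < i)%N -> h i j = 0).

Definition unit_lower (B : pzRingType) (n : nat) (h : 'M[B]_n) : Prop :=
  EL h /\ (forall i, h i i = 1) /\ (forall i j : 'I_n, (i < j)%N -> h i j = 0).

(* Main.v *)
Require Import Defs.
From HB Require Import structures.
From mathcomp Require Import all_boot all_order all_algebra.
From mathcomp Require Import reals.
From mathcomp Require Import zify.
Import Order.TTheory GRing.Theory Num.Theory.
Local Open Scope ring_scope.
Set Implicit Arguments. Unset Strict Implicit.

Section S.
Variables (B : pzRingType) (n : nat).
Local Notation M := ('M[B]_n).

Lemma mulDD (i j k l : 'I_n) (a b : B) :
  (a *: delta_mx i j) *m (b *: delta_mx k l) =
  (if j == k then a * b else 0) *: (delta_mx i l : M).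
Proof.
apply/matrixP => x y; rewrite !mxE.
rewrite (bigD1 j) //= big1; last first.
  by move=> z /negPf hz; rewrite !mxE hz andbF mulr0 mul0r.
rewrite !mxE eqxx andbT addr0.
case: (x == i); case: (y == l); case: (j == k) => /=;
  by rewrite ?mulr0 ?mul0r ?mulr1 ?mul1r.
Qed.

Definition emx (i j : 'I_n) (c : B) : M := 1%:M + c *: delta_mx i j.

Lemma emx_mul i j a b : (i != j) \/ a = 0 -> emx i j a *m emx i j b = emx i j (a + b).
Proof.
move=> h; rewrite /emx mulmxDl !mulmxDr !mul1mx mulmx1 mulDD.
have -> : (if j == i then a * b else 0) = 0.
  case: h => [/negPf|->]; first by rewrite eq_sym => ->.
  by rewrite mul0r; case: ifP.
by rewrite scale0r addr0 scalerDl -addrA (addrC (b *: _)).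
Qed.

Lemma emx0 i j : emx i j 0 = 1%:M.
Proof. by rewrite /emx scale0r addr0. Qed.

Lemma emx_elem i j c : (i != j) \/ c = 0 -> elementary (emx i j c).
Proof.
move=> h; split.
  move=> x; rewrite !mxE eqxx /=; case: h => [/negPf hij | ->]; last by rewrite mul0r addr0.
  have -> : ((x == i) && (x == j)) = false.
    by apply/negP => /andP[/eqP -> /eqP e]; move: hij; rewrite e eqxx.
  by rewrite mulr0 addr0.
exists i, j => k l hkl hp; rewrite !mxE (negPf hkl) /= add0r.
suff -> : ((k == i) && (l == j)) = false by rewrite mulr0.
apply/negP => /andP [/eqP hk /eqP hl]; move: hp; by rewrite hk hl eqxx.
Qed.

Lemma elem_form (s : M) : elementary s -> exists i j c, ((i != j) \/ c = 0) /\ s = emx i j c.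
Proof.
move=> [hd [i [j hij]]].
case: (eqVneq i j) => [eij|nij].
  exists i, j, 0; split; first by right.
  rewrite emx0; apply/matrixP => k l; rewrite !mxE.
  case: (eqVneq k l) => [->|kl]; first by rewrite hd.
  rewrite hij //; apply/negP => /eqP [hk hl]; move: kl; by rewrite hk hl eij eqxx.
exists i, j, (s i j); split; first by left.
apply/matrixP => k l; rewrite !mxE.
case: (eqVneq k l) => [->|kl].
  rewrite hd /=; have -> : ((l == i) && (l == j)) = false.
    by apply/negP => /andP[/eqP -> /eqP e]; move: nij; rewrite e eqxx.
  by rewrite mulr0 addr0.
rewrite add0r; case: (eqVneq (k, l) (i, j)) => [[-> ->]|p]; first by rewrite !eqxx mulr1.
rewrite hij //.
suff -> : ((k == i) && (l == j)) = false by rewrite mulr0.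
apply/negP => /andP [/eqP hk /eqP hl]; move: p; by rewrite hk hl eqxx.
Qed.

Lemma EL_elem (s : M) : elementary s -> EL s.
Proof. by move=> h; rewrite -[s]mulmx1; exact: (EL_mul h (@EL_one B n)). Qed.

Lemma EL_mulmx (g h : M) : EL g -> EL h -> EL (g *m h).
Proof.
elim=> [|s g' hs _ IH] hh; first by rewrite mul1mx.
by rewrite -mulmxA; apply: EL_mul => //; apply: IH.
Qed.

Lemma EL_inv (g : M) : EL g -> exists ginv, [/\ EL ginv, g *m ginv = 1%:M & ginv *m g = 1%:M].
Proof.
elim=> [|s g' hs _ [gi [hgi h1 h2]]]; first by exists 1%:M; rewrite mul1mx; split=> //; exact: (@EL_one B n).
have [i [j [c [hc ->]]]] := elem_form hs.
have hc' : (i != j) \/ - c = 0 by case: hc => [|->]; [left|right; rewrite oppr0].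
exists (gi *m emx i j (- c)); split.
- by apply: EL_mulmx => //; apply: EL_elem; apply: emx_elem.
- by rewrite -mulmxA (mulmxA g') h1 mul1mx emx_mul // subrr emx0.
- by rewrite -mulmxA (mulmxA (emx _ _ _)) emx_mul // addNr emx0 mul1mx.
Qed.


Definition prodl (l : seq M) := foldr (fun N acc => (1%:M + N) *m acc) 1%:M l.

Lemma prodl_sum (l : seq M) : pairwise (fun A C => A *m C == 0) l ->
  prodl l = 1%:M + \sum_(N <- l) N.
Proof.
elim: l => [|N l IH]; first by rewrite big_nil addr0.
rewrite pairwise_cons => /andP[hall hp].
rewrite /= -/(prodl l) IH // big_cons mulmxDl !mulmxDr !mul1mx mulmx1.
rewrite (mulmx_sumr N).
have -> : \sum_(X <- l) N *m X = 0.
  apply: big1_seq => X /andP[_ hX]; move/allP: hall => hall.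
  exact/eqP/(hall X hX).
by rewrite addr0 -addrA (addrC N).
Qed.

Lemma factor (h : M) (r : rel ('I_n * 'I_n)) : transitive r -> total r ->
  (forall i, h i i = 1) ->
  (forall p q, r p q -> p.2 = q.1 -> (h - 1%:M) q.1 q.2 = 0) ->
  exists l, [/\ size l = (n * n)%N, forall N, N \in l -> elementary (1%:M + N)
            & h = prodl l].
Proof.
move=> rt rtot hd hz.
set F := fun p : 'I_n * 'I_n => (h - 1%:M) p.1 p.2 *: (delta_mx p.1 p.2 : M).
set s := sort r (enum {: 'I_n * 'I_n}).
exists (map F s); split.
- by rewrite size_map size_sort -cardE card_prod card_ord.
- move=> N /mapP[p _ ->]; rewrite /F; apply: (@emx_elem p.1 p.2).
  case: (eqVneq p.1 p.2) => [e|]; [right|by left].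
  by rewrite e !mxE hd eqxx subrr.
- rewrite prodl_sum; last first.
    rewrite pairwise_map; apply: (@sub_pairwise _ r).
      move=> p q /= hpq; rewrite /F mulDD; apply/eqP.
      case: eqP => [e|_]; last by rewrite scale0r.
      by rewrite (hz p q) // mulr0 scale0r.
    by rewrite -sorted_pairwise //; apply: sort_sorted.
  rewrite big_map (perm_big (enum {: 'I_n * 'I_n})); last by rewrite perm_sort.
  rewrite big_enum /= -(pair_big xpredT xpredT (fun i j => F (i, j))) /=.
  by rewrite -matrix_sum_delta addrC subrK.
Qed.

Lemma ltF (i j : 'I_n) : (i < j)%N -> ((i == j) = false) * ((j == i) = false).
Proof.
move=> h; split; apply/negP => /eqP e; move: h; rewrite e ltnn //.
Qed.

Definition UT (h : M) := (forall i, h i i = 1) /\ (forall i j : 'I_n, (j < i)%N -> h i j = 0).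
Definition LT (h : M) := (forall i, h i i = 1) /\ (forall i j : 'I_n, (i < j)%N -> h i j = 0).

Lemma UT1 : UT 1%:M.
Proof.
split=> [i|i j hij]; rewrite !mxE ?eqxx //.
by have -> : (i == j) = false by apply/negP => /eqP e; move: hij; rewrite e ltnn.
Qed.
Lemma LT1 : LT 1%:M.
Proof.
split=> [i|i j hij]; rewrite !mxE ?eqxx //.
by have -> : (i == j) = false by apply/negP => /eqP e; move: hij; rewrite e ltnn.
Qed.

Lemma UT_mul (g h : M) : UT g -> UT h -> UT (g *m h).
Proof.
move=> [gd gz] [hd hz]; split=> [i|i j hji]; rewrite !mxE.
  rewrite (bigD1 i) //= gd hd mul1r big1 ?addr0 // => k hk.
  case: (ltngtP k i) => hki; [by rewrite gz ?mul0r|by rewrite hz ?mulr0|].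
  by move: hk; rewrite (_ : k = i) ?eqxx //; apply: val_inj.
rewrite big1 // => k _; case: (ltnP k i) => hki; first by rewrite gz ?mul0r.
by rewrite hz ?mulr0 //; apply: leq_trans hki.
Qed.

Lemma LT_mul (g h : M) : LT g -> LT h -> LT (g *m h).
Proof.
move=> [gd gz] [hd hz]; split=> [i|i j hji]; rewrite !mxE.
  rewrite (bigD1 i) //= gd hd mul1r big1 ?addr0 // => k hk.
  case: (ltngtP i k) => hki; [by rewrite gz ?mul0r|by rewrite hz ?mulr0|].
  by move: hk; rewrite (_ : k = i) ?eqxx //; apply: val_inj.
rewrite big1 // => k _; case: (ltnP i k) => hki; first by rewrite gz ?mul0r.
by rewrite hz ?mulr0 //; apply: leq_ltn_trans hki hji.
Qed.

Lemma UT_factor (h : M) : UT h -> exists l, [/\ size l = (n * n)%N,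
  forall N, N \in l -> elementary (1%:M + N) & h = prodl l].
Proof.
move=> [hd hz]; apply: (@factor h (fun p q => (q.2 <= p.2)%N)) => //.
- by move=> a b c /= h1 h2; apply: leq_trans h2 h1.
- by move=> a b; apply: leq_total.
- move=> p q /= hpq e; rewrite !mxE; case: (ltngtP q.2 q.1) => hq.
  + by rewrite hz // (ltF hq) subr0.
  + by move: hpq; rewrite e leqNgt hq.
  + by rewrite (_ : q.1 = q.2) ?hd ?eqxx ?subrr //; exact: val_inj.
Qed.

Lemma LT_factor (h : M) : LT h -> exists l, [/\ size l = (n * n)%N,
  forall N, N \in l -> elementary (1%:M + N) & h = prodl l].
Proof.
move=> [hd hz]; apply: (@factor h (fun p q => (p.2 <= q.2)%N)) => //.
- by move=> a b c /= h1 h2; apply: leq_trans h1 h2.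
- by move=> a b; apply: leq_total.
- move=> p q /= hpq e; rewrite !mxE; case: (ltngtP q.1 q.2) => hq.
  + by rewrite hz // (ltF hq) subr0.
  + by move: hpq; rewrite e leqNgt hq.
  + by rewrite (_ : q.1 = q.2) ?hd ?eqxx ?subrr //; exact: val_inj.
Qed.


Lemma mxpow_emx i j a m : i != j -> mxpow (emx i j a) m = emx i j (a *+ m).
Proof.
move=> hij; elim: m => [|m IH]; first by rewrite mulr0n emx0.
by rewrite /= IH emx_mul ?mulrS //; left.
Qed.

Lemma key_emx i j k b : i != j -> i != k -> k != j ->
  emx i k b *m emx k j 1 = emx i j b *m (emx k j 1 *m emx i k b).
Proof.
move=> hij hik hkj.
rewrite /emx !(mulmxDl, mulmxDr, mul1mx, mulmx1) !mulDD !eqxx.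
rewrite (eq_sym j i) (negPf hij) (eq_sym j k) (negPf hkj).
rewrite !scale0r !addr0 !mulr1.
by rewrite addrA -(addrA 1%:M) (addrC (1 *: _)) !addrA.
Qed.


Lemma comm_emx i j k b : i != j -> i != k -> k != j ->
  emx i j b = emx i k b *m (emx k j 1 *m (emx i k (- b) *m emx k j (-1))).
Proof.
move=> hij hik hkj.
rewrite !mulmxA key_emx // -!mulmxA (mulmxA (emx i k b)) emx_mul ?subrr ?emx0 ?mul1mx; last by left.
by rewrite emx_mul ?subrr ?emx0 ?mulmx1 //; left.
Qed.

End S.

From mathcomp Require Import ring lra.

Lemma zero_of_bound (R : realType) (x K : R) :
  (forall m : nat, m%:R * `|x| <= K) -> x = 0.
Proof.
move=> h; apply/eqP; apply/negPn/negP => hx.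
have hK : 0 <= K by have := h 0%N; rewrite mul0r.
have ax : 0 < `|x| by rewrite normr_gt0.
have := archi_boundP (divr_ge0 hK (ltW ax)).
set m := Num.bound _ => hm.
have := h m; rewrite -ler_pdivlMr // => hm'.
by move: (lt_le_trans hm hm'); rewrite ltxx.
Qed.

Lemma bnd3 (R : realType) (u a v b w c d C : R) :
  `|u - a - v| <= C -> `|v - b - w| <= C -> `|w - c - d| <= C ->
  c = - a -> d = - b -> `|u| <= C *+ 3.
Proof.
rewrite !ler_norml => /andP[h1 h2] /andP[h3 h4] /andP[h5 h6] hc hd.
rewrite hc hd in h5 h6; apply/andP; split; lra.
Qed.

Lemma bndS (R : realType) (u a v C K : R) :
  `|u - a - v| <= C -> a = 0 -> `|v| <= K -> `|u| <= K + C.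
Proof.
rewrite !ler_norml => /andP[h1 h2] ha /andP[h3 h4].
rewrite ha in h1 h2; apply/andP; split; lra.
Qed.

Lemma pick3 n : (3 <= n)%N -> forall i j : 'I_n, exists k : 'I_n, i != k /\ k != j.
Proof.
move=> hn i j.
have [x [hx hxi hxj]] : exists x, [/\ (x < 3)%N, (val i != x) & (x != val j)].
  case: (eqVneq (val i) 0%N) => hi; case: (eqVneq (val j) 0%N) => hj.
  - exists 1%N; split => //; lia.
  - case: (eqVneq (val j) 1%N) => hj1; [exists 2%N | exists 1%N]; split => //; lia.
  - case: (eqVneq (val i) 1%N) => hi1; [exists 2%N | exists 1%N]; split => //; lia.
  - exists 0%N; split => //; lia.
exists (Ordinal (leq_trans hx hn)); split; apply/eqP => e.
  by move: hxi; rewrite e eqxx.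
by move: hxj; rewrite -e eqxx.
Qed.

Theorem lemma2p5 (R : realType) (B : pzRingType) (n : nat) (hn : (3 <= n)%N)
  (phi : 'M[B]_n -> R) (hq : quasi_hom phi) (hh : homogeneous phi) :
  (forall s : 'M[B]_n, elementary s -> phi s = 0) /\
  (forall h : 'M[B]_n, unit_upper h \/ unit_lower h -> phi h = 0).
Proof.
have [C hC] := hq.
have EL1 : EL (1%:M : 'M[B]_n) := @EL_one B n.
have phi1 : phi 1%:M = 0.
  by have := hh _ _ EL1 EL1 (mulmx1 _) (mulmx1 _) 0; rewrite /= mul0r.
have phiN : forall g gi, EL g -> EL gi -> g *m gi = 1%:M -> gi *m g = 1%:M ->
    phi gi = - phi g.
  move=> g gi a b c d; have := hh g gi a b c d (Negz 0); rewrite /= mulmx1 => ->.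
  by rewrite NegzE mulrNz mulN1r.
have phiP : forall g m, EL g -> phi (mxpow g m) = m%:R * phi g.
  move=> g m hg; have [gi [hgi h1 h2]] := EL_inv hg.
  exact: (hh g gi hg hgi h1 h2 m).
have ELe : forall (i j : 'I_n) (c : B), i != j -> EL (emx i j c).
  by move=> i j c hij; apply: EL_elem; apply: emx_elem; left.
have inv : forall (i j : 'I_n) (c : B), i != j ->
    emx i j c *m emx i j (- c) = 1%:M /\ emx i j (- c) *m emx i j c = 1%:M.
  move=> i j c hij; rewrite !emx_mul ?subrr ?addNr ?emx0 //; by left.
have part1 : forall (i j : 'I_n) (a : B), i != j -> phi (emx i j a) = 0.
  move=> i j a hij; have [k [hik hkj]] := pick3 hn i j.
  apply: (@zero_of_bound _ _ (C *+ 3)) => m.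
  rewrite -[m%:R]normr_nat -normrM -phiP; last exact: ELe.
  have -> := (mxpow_emx a m hij).
  have -> := comm_emx (a *+ m) hij hik hkj.
  apply: (bnd3 (hC _ _ (ELe _ _ _ hik) (EL_mulmx (ELe _ _ _ hkj) (EL_mulmx (ELe _ _ _ hik) (ELe _ _ _ hkj)))) 
               (hC _ _ (ELe _ _ _ hkj) (EL_mulmx (ELe _ _ _ hik) (ELe _ _ _ hkj)))
               (hC _ _ (ELe _ _ _ hik) (ELe _ _ _ hkj))).
  - have [h1 h2] := inv _ _ (a *+ m) hik.
    exact: (phiN _ _ (ELe _ _ _ hik) (ELe _ _ _ hik) h1 h2).
  - have [h1 h2] := inv _ _ 1 hkj.
    exact: (phiN _ _ (ELe _ _ _ hkj) (ELe _ _ _ hkj) h1 h2).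
have part1' : forall s : 'M[B]_n, elementary s -> phi s = 0.
  move=> s hs; have [i [j [c [[hij|->] ->]]]] := elem_form hs; first exact: part1.
  by rewrite emx0.
have bnd : forall l : seq 'M[B]_n, (forall N, N \in l -> elementary (1%:M + N)) ->
    EL (prodl l) /\ `|phi (prodl l)| <= (size l)%:R * C.
  elim=> [|N l IH] hl; first by rewrite /= phi1 normr0 mul0r.
  have hN : elementary (1%:M + N) by apply: hl; rewrite inE eqxx.
  have [hE hB] : EL (prodl l) /\ `|phi (prodl l)| <= (size l)%:R * C.
    by apply: IH => X hX; apply: hl; rewrite inE hX orbT.
  split; first exact: EL_mul.
  rewrite /= -/(prodl l) -addn1 natrD mulrDl mul1r.
  exact: (bndS (hC _ _ (EL_elem hN) hE) (part1' _ hN) hB).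
split => // h [[hE [hd hz]] | [hE [hd hz]]].
- apply: (@zero_of_bound _ _ ((n * n)%:R * C)) => m.
  rewrite -[m%:R]normr_nat -normrM -phiP //.
  have hu : UT (mxpow h m).
    elim: m => [|m IH]; first exact: UT1.
    exact: UT_mul.
  have [l [hs hl ->]] := UT_factor hu.
  by rewrite -hs; have [] := bnd l hl.
- apply: (@zero_of_bound _ _ ((n * n)%:R * C)) => m.
  rewrite -[m%:R]normr_nat -normrM -phiP //.
  have hu : LT (mxpow h m).
    elim: m => [|m IH]; first exact: LT1.
    exact: LT_mul.
  have [l [hs hl ->]] := LT_factor hu.
  by rewrite -hs; have [] := bnd l hl.
Qed.
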